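(* In the setting described in the context, assume that $q=p^h$ is a square, that $t$ is a prime divisor of $q^2+q+1$, and that $p \bmod t$ is a generator of the multiplicative group of $\mathbb{Z}_t$. Then $t$ divides either $q+\sqrt q+1$ or $q-\sqrt q+1$, and there is $\varepsilon\in\{1,-1\}$ such that $$w_1=w_2=\dots=w_{t-1}=\frac{q+1+\varepsilon\sqrt q}{t},\qquad w_0=\frac{q+1+\varepsilon(1-t)\sqrt q}{t}.$$
   Context: Let $q=p^h$ with $p$ prime, $h\ge1$. Let $\alpha$ be a primitive element of $\mathbb{F}_{q^3}$; the points of $PG(2,q)$ are the 1-dimensional $\mathbb{F}_q$-subspaces of $\mathbb{F}_{q^3}$, and $P_i$ denotes the point represented by $\alpha^i$, so $PG(2,q)=\{P_0,\dots,P_{q^2+q}\}$. Let $\tau:P_i\mapsto P_{ip\bmod(q^2+q+1)}$ (a collineation) and let $\ell_0$ be a line of $PG(2,q)$ fixed by $\tau$. Let $t$ be a positive divisor of $q^2+q+1$ and for $i=0,\dots,t-1$ let $O_i=\{P_u:u\equiv i\pmod t\}$. For $u=0,\dots,t-1$ let $w_u=|\ell_0\cap O_u|$. *)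

(* Defs.v *)
From mathcomp Require Import all_boot all_order all_algebra all_field.
Set Implicit Arguments. Unset Strict Implicit. Unset Printing Implicit Defensive.
Import GRing.Theory.
Local Open Scope ring_scope.

Definition subFq (L : finFieldType) (q : nat) : {set L} :=
  [set x : L | x ^+ q == x].

(* V is a 2-dimensional F_q-subspace of L (a line of PG(2,q) when
   #|L| = q^3): closed under addition and under scaling by F_q,
   and of cardinality q^2. *)
Definition is_Fq_plane (L : finFieldType) (q : nat) (V : {set L}) : Prop :=
  [/\ (0 : L) \in V,
      (forall x y, x \in V -> y \in V -> x + y \in V),
      (forall c x, c \in subFq L q -> x \in V -> c * x \in V)
    & #|V| = (q ^ 2)%N].

(* P_i lies on the line represented by V iff alpha^i \in V.
   The line is fixed by tau : P_i |-> P_{ip mod (q^2+q+1)}. *)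
Definition tau_fixed (L : finFieldType) (q p : nat) (alpha : L) (V : {set L}) :=
  forall i : nat, (i < q ^ 2 + q + 1)%N ->
    (alpha ^+ i \in V) = (alpha ^+ ((i * p) %% (q ^ 2 + q + 1)) \in V).

(* w_u = |ell_0 cap O_u|, O_u = {P_i : i = u mod t}, P_0..P_{q^2+q} *)
Definition w_count (L : finFieldType) (q t : nat) (alpha : L) (V : {set L})
    (u : nat) : nat :=
  #|[set i : 'I_(q ^ 2 + q + 1) | ((i %% t)%N == u) && (alpha ^+ i \in V)]|.

(* Main.v *)
Require Import Defs.
From mathcomp Require Import all_boot all_order all_algebra all_field.
From mathcomp Require Import zify ring.
Set Implicit Arguments. Unset Strict Implicit. Unset Printing Implicit Defensive.
Import GRing.Theory.
Definition cnt n (Q : nat -> bool) := \sum_(0 <= i < n) (Q i : nat).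

Lemma per_mul (T : Type) (F : nat -> T) g : (forall i, F (i + g) = F i) ->
  forall m i, F (i + g * m) = F i.
Proof.
move=> H; elim=> [|m IH] i; first by rewrite muln0 addn0.
by rewrite mulnS addnA IH H.
Qed.

Lemma shift_sum (F : nat -> nat) a n :
  \sum_(a <= i < a + n) F i = \sum_(0 <= i < n) F (i + a).
Proof.
elim: n => [|n IH]; first by rewrite addn0 big_geq // big_geq.
rewrite addnS big_nat_recr ?leq_addr //= IH.
by rewrite (big_nat_recr n) //= (addnC a n).
Qed.

Lemma block_sum (F : nat -> nat) g m : (forall i, F (i + g) = F i) ->
  \sum_(0 <= i < g * m) F i = m * \sum_(0 <= i < g) F i.
Proof.
move=> H; elim: m => [|m IH]; first by rewrite muln0 big_geq.
rewrite mulnS addnC (big_cat_nat (n := g * m)) ?leq_addr //= IH.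
rewrite shift_sum mulSn addnC; congr (_ + _).
by apply: eq_bigr => i _; rewrite per_mul.
Qed.

Lemma window_sum (F : nat -> nat) N : (forall i, F (i + N) = F i) ->
  forall i, \sum_(0 <= x < N) F (i + x) = \sum_(0 <= x < N) F x.
Proof.
move=> H; elim=> [|i IH]; first by [].
case: N H IH => [|N] H IH; first by rewrite !big_geq.
rewrite -IH (big_nat_recr N) // (big_nat_recl N) //= addnC.
congr (_ + _); last by apply: eq_bigr => j _; rewrite addSnnS.
by rewrite addSnnS H addn0.
Qed.

Lemma noshift (P : nat -> bool) N x : 0 < x < N ->
  (forall i, P (i + N) = P i) -> (forall i, P (i + x) = P i) ->
  coprime N (cnt N P) -> False.
Proof.
move=> /andP[x0 xN] HN Hx cop.
have N0 : 0 < N by apply: leq_trans xN.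
have [a _ /dvdnP[k Hk]] := Bezoutl x N0.
set g := gcdn N x in Hk.
have Pg : forall i, P (i + g) = P i.
  move=> i; rewrite -(per_mul Hx a (i + g)) -addnA (mulnC x a) Hk.
  by rewrite mulnC per_mul.
have gN : g %| N by exact: dvdn_gcdl.
have g0 : 0 < g by rewrite gcdn_gt0 N0.
have defN : N = g * (N %/ g) by rewrite mulnC divnK.
have Hc : cnt N P = (N %/ g) * cnt g P.
  by rewrite /cnt {1}defN (block_sum (F := fun i => nat_of_bool (P i))) // => i; rewrite Pg.
have m1 : N %/ g %| 1.
  rewrite -(eqP cop) dvdn_gcd Hc dvdn_mulr //.
  by rewrite {2}defN dvdn_mull.
move: m1; rewrite dvdn1 => /eqP m1.
have : g <= x by apply: dvdn_leq => //; exact: dvdn_gcdr.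
by rewrite m1 muln1 in defN; rewrite -defN leqNgt xN.
Qed.

Local Open Scope ring_scope.

Lemma Ft_eq (t m n : nat) : prime t -> (m%:R : 'F_t) = n%:R -> (m %% t = n %% t)%N.
Proof.
move=> tp; wlog nm : m n / (n <= m)%N.
  move=> W E; case: (leqP n m) => [|/ltnW] nm; first exact: W.
  by symmetry; apply: W.
move/eqP; rewrite -subr_eq0 -natrB // -(dvdn_pcharf (pchar_Fp tp)).
by rewrite -eqn_mod_dvd // => /eqP.
Qed.

Lemma sum_eqk k t b : (k < t)%N -> \sum_(0 <= u < t) ((k == u) && b : nat) = b.
Proof.
move=> kt; rewrite (bigD1_seq k) ?mem_index_iota ?iota_uniq //= eqxx /=.
rewrite big1 ?addn0 //; first by case: b.
by move=> u; rewrite eq_sym => /negbTE ->.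
Qed.

Section Field.
Variables (L : finFieldType) (p h q : nat) (alpha : L).
Hypotheses (pp : prime p) (h0 : (0 < h)%N) (qE : q = (p ^ h)%N)
  (cardL : #|L| = (q ^ 3)%N) (prim : (#|L|.-1).-primitive_root alpha).

Local Notation K := (subFq L q).

Lemma q_gt1 : (1 < q)%N.
Proof. by rewrite qE -(expn0 p) ltn_exp2l ?prime_gt1. Qed.

Lemma pcharL : p \in [pchar L].
Proof. by apply: (@card_finPcharP _ p (h * 3)) => //; rewrite cardL qE expnM. Qed.

Lemma frobD (x y : L) : (x + y) ^+ q = x ^+ q + y ^+ q.
Proof.
apply: exprDn_pchar; rewrite qE pnatX; apply/orP; left.
by rewrite pnatE // (pcharf_eq pcharL) ?inE.
Qed.

Lemma frobB (x y : L) : (x - y) ^+ q = x ^+ q - y ^+ q.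
Proof. by apply/eqP; rewrite eq_sym subr_eq -frobD subrK. Qed.

Lemma K0 : (0 : L) \in K.
Proof. by rewrite inE expr0n; case: q q_gt1. Qed.

Lemma KB x y : x \in K -> y \in K -> x - y \in K.
Proof. by rewrite !inE frobB => /eqP-> /eqP->. Qed.

Lemma KM x y : x \in K -> y \in K -> x * y \in K.
Proof. by rewrite !inE exprMn => /eqP-> /eqP->. Qed.

Lemma KV x : x \in K -> x^-1 \in K.
Proof. by rewrite !inE exprVn => /eqP->. Qed.


Local Notation N := (q ^ 2 + q + 1)%N.

Lemma nE : (#|L|.-1 = N * q.-1)%N.
Proof. have := q_gt1; rewrite cardL; case: q => // r _; rewrite /=; nia. Qed.

Lemma N_gt0 : (0 < N)%N. Proof. by rewrite addn1. Qed.

Lemma alpha_neq0 : alpha != 0.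
Proof.
apply/negP => /eqP a0; have := prim_expr_order prim.
rewrite a0 expr0n; have := q_gt1; rewrite nE; case: q => // [[|r]] //= _.
by move/eqP; rewrite eq_sym oner_eq0.
Qed.

Lemma eq_alpha i j : (alpha ^+ i == alpha ^+ j) = (i == j %[mod N * q.-1]).
Proof. by rewrite (eq_prim_root_expr prim) nE. Qed.

Lemma alphaNK k : alpha ^+ (N * k) \in K.
Proof.
rewrite inE -exprM eq_alpha; apply/eqP.
have := q_gt1; case: q => // r _ /=.
move: (r.+1 ^ 2 + r.+1 + 1)%N => X.
by rewrite mulnS addnC -mulnA (mulnC k r) mulnA (mulnC (X * r)) modnMDl.
Qed.

Lemma cardK : (q <= #|K|)%N.
Proof.
pose S := [set alpha ^+ (N * k) | k : 'I_q.-1].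
have SK : S \subset K :\ 0.
  apply/subsetP => _ /imsetP[k _ ->]; rewrite in_setD1 alphaNK andbT.
  by rewrite expf_neq0 // alpha_neq0.
have cS : #|S| = q.-1.
  rewrite card_imset ?card_ord // => i j /eqP; rewrite eq_alpha.
  rewrite !(mulnC N) -!muln_modl eqn_pmul2r ?N_gt0 // !modn_small //.
  by move/eqP/val_inj.
rewrite (cardsD1 0) K0 add1n; have := subset_leq_card SK; rewrite cS.
by have := q_gt1; case: q.
Qed.


Lemma plane_eq (V1 V2 : {set L}) a b : is_Fq_plane q V1 -> is_Fq_plane q V2 ->
  a \in V1 -> b \in V1 -> a \in V2 -> b \in V2 -> b != 0 ->
  (forall c, c \in K -> a != c * b) -> V1 = V2.
Proof.
move=> P1 P2 a1 b1 a2 b2 b0 ind.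
pose Sp := [set c.1 * a + c.2 * b | c in setX K K].
have cSp : #|Sp| = (#|K| * #|K|)%N.
  rewrite card_in_imset ?cardsX //.
  move=> [c1 d1] [c2 d2]; rewrite !in_setX /= => /andP[c1K d1K] /andP[c2K d2K] E.
  case: (eqVneq c1 c2) => [ec|nc].
    by subst c2; move: E => /addrI /(mulIf b0) ->.
  have E2 : (c1 - c2) * a = (d2 - d1) * b.
    apply/eqP; rewrite -subr_eq0.
    rewrite (_ : (c1 - c2) * a - (d2 - d1) * b = (c1 * a + d1 * b) - (c2 * a + d2 * b)).
      by rewrite E subrr.
    by ring.
  have Ea : a = ((c1 - c2)^-1 * (d2 - d1)) * b.
    by rewrite -mulrA -E2 mulKf // subr_eq0.
  by move: (ind _ (KM (KV (KB c1K c2K)) (KB d2K d1K))); rewrite -Ea eqxx.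
have gen V : is_Fq_plane q V -> a \in V -> b \in V -> V = Sp.
  case=> V0 VD VZ cV aV bV; apply/eqP; rewrite eq_sym eqEcard; apply/andP; split.
    apply/subsetP => x /imsetP[[c d]]; rewrite in_setX /= => /andP[cK dK] ->.
    by apply: VD; apply: VZ.
  by rewrite cSp cV expnS expn1 leq_mul // cardK.
by rewrite (gen V1) // (gen V2).
Qed.


Lemma cnt_card n (Q : nat -> bool) : cnt n Q = #|[set i : 'I_n | Q i]|.
Proof.
rewrite /cnt big_mkord -sum1_card [RHS]big_mkcond /=; apply: eq_bigr => i _.
by rewrite inE; case: (Q i).
Qed.

Variable V : {set L}.
Hypothesis plV : is_Fq_plane q V.
Local Notation P := (fun i : nat => alpha ^+ i \in V).

Lemma alpha_n : alpha ^+ (N * q.-1) = 1.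
Proof. by rewrite -nE prim_expr_order. Qed.

Lemma Pper i : P (i + N)%N = P i.
Proof.
case: plV => V0 VD VZ cV /=; apply/idP/idP => H.
  have := VZ _ _ (alphaNK (q.-2)) H; rewrite -exprD.
  rewrite (_ : (N * q.-2 + (i + N) = i + N * q.-1)%N) ?exprD ?alpha_n ?mulr1 //.
  by have := q_gt1; case: q => // [[|r]] //= _; ring.
by have := VZ _ _ (alphaNK 1) H; rewrite -exprD muln1 addnC.
Qed.

Lemma cntP : cnt N P = (q + 1)%N.
Proof.
have Hc : cnt (#|L|.-1) P = (#|V| - 1)%N.
  rewrite cnt_card (cardsD1 0 V); case: plV => -> _ _ _; rewrite add1n subSS subn0.
  pose f (i : 'I_(#|L|.-1)) := alpha ^+ i.
  have finj : injective f.
    move=> i j /eqP; rewrite /f eq_alpha -nE !modn_small //; move/eqP; exact: val_inj.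
  rewrite -(card_imset _ finj); apply: eq_card => x; rewrite in_setD1.
  apply/imsetP/andP => [[i]|[x0 xV]].
    by rewrite inE => iV ->; rewrite /f iV expf_neq0 // alpha_neq0.
  have xn : x ^+ #|L|.-1 = 1.
    apply: (mulIf x0); rewrite mul1r -exprSr prednK ?expf_card //.
    by apply/card_gt0P; exists 0.
  have [i xi] := prim_rootP prim xn; exists i; last by []. by rewrite inE -xi.
move: Hc; rewrite nE /cnt (block_sum (F := fun i => nat_of_bool (P i))); last first.
  by move=> i; rewrite Pper.
case: plV => _ _ _ ->; have := q_gt1; case: q => // [[|r]] // _ /= E.
apply/eqP; rewrite -(eqn_pmul2l (ltn0Sn r)); apply/eqP.
move: E; set X := \sum_(_ <= _ < _) _; move=> E.
rewrite E; nia.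
Qed.

Lemma indep i j c : (i < N)%N -> (j < N)%N -> i != j -> c \in K ->
  alpha ^+ i != c * alpha ^+ j.
Proof.
move=> iN jN ij cK; apply/negP => /eqP E.
have c0 : c != 0.
  by apply/negP => /eqP c0; move: E; rewrite c0 mul0r => /eqP; rewrite expf_eq0 (negbTE alpha_neq0) andbF.
have cq : c ^+ q.-1 = 1.
  apply: (mulIf c0); rewrite mul1r -exprSr prednK; last by have := q_gt1; case: q.
  by move: cK; rewrite inE => /eqP.
have : alpha ^+ (i * q.-1) == alpha ^+ (j * q.-1).
  by rewrite !exprM E exprMn cq mul1r.
rewrite eq_alpha -!muln_modl eqn_pmul2r; last by have := q_gt1; case: q => // [[]].
by rewrite !modn_small // (negbTE ij).
Qed.

Lemma coprimeN : coprime N (q + 1).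
Proof.
rewrite coprime_sym -coprime_modr (_ : N = q * (q + 1) + 1)%N; last by ring.
by rewrite modnMDl modn_small ?coprimen1 // addn1 ltnS; have := q_gt1; case: q.
Qed.

Lemma noint x i j : (0 < x < N)%N -> (i < N)%N -> (j < N)%N -> i != j ->
  P i -> P j -> P (i + x)%N -> P (j + x)%N -> False.
Proof.
move=> xN iN jN ij Pi Pj Pix Pjx.
pose V' := [set v | alpha ^+ x * v \in V].
have plV' : is_Fq_plane q V'.
  case: plV => V0 VD VZ cV; split.
  - by rewrite inE mulr0.
  - by move=> a b; rewrite !inE mulrDr; exact: VD.
  - by move=> c a cK; rewrite !inE mulrCA; exact: VZ.
  rewrite -cV; have -> : V' = (fun v => alpha ^+ x * v) @^-1: V.
    by apply/setP => v; rewrite !inE.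
  apply: card_preimset; apply: mulfI; by rewrite expf_neq0 // alpha_neq0.
have E : V = V'.
  apply: (plane_eq (a := alpha ^+ i) (b := alpha ^+ j)) => //.
  - by rewrite inE -exprD addnC.
  - by rewrite inE -exprD addnC.
  - by rewrite expf_neq0 // alpha_neq0.
  - by move=> c cK; apply: indep.
apply: (noshift (P := P) xN) => [k|k|].
- exact: Pper.
- by rewrite /= {2}E inE exprD mulrC.
- by rewrite cntP coprimeN.
Qed.

Variables (s t : nat).
Hypotheses (tau : tau_fixed q p alpha V) (qs : q = (s ^ 2)%N) (tp : prime t)
  (tN : (t %| N)%N) (prt : (t.-1).-primitive_root (p%:R : 'F_t)).

Local Notation c u := (cnt N (fun i => ((i %% t)%N == u) && P i)).

Lemma cop_Np : coprime N p.
Proof.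
have qp : q = (p * p ^ h.-1)%N by rewrite qE -expnS prednK.
rewrite coprime_sym -coprime_modr (_ : N = q * (q + 1) + 1)%N; last by ring.
by rewrite {1}qp -mulnA (mulnC p) modnMDl modn_small ?coprimen1 // prime_gt1.
Qed.

Lemma mod_cancel i j : (i < N)%N -> (j < N)%N -> ((i * p) %% N = (j * p) %% N)%N -> i = j.
Proof.
wlog ji : i j / (j <= i)%N.
  move=> W iN jN E; case: (leqP j i) => [|/ltnW] ij; first exact: W.
  by symmetry; apply: W.
move=> iN jN /eqP; rewrite eqn_mod_dvd ?leq_mul2r ?ji ?orbT // -mulnBl.
rewrite Gauss_dvdl ?cop_Np // => d.
have : (i - j < N)%N by apply: leq_ltn_trans (leq_subr _ _) iN.
case: (posnP (i - j)) => [|ij0]; first by lia.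
by move: (dvdn_leq ij0 d); lia.
Qed.

Lemma c_mono u : (c (u %% t) <= c ((u * p) %% t))%N.
Proof.
rewrite !cnt_card.
pose g (i : 'I_N) : 'I_N := Ordinal (ltn_pmod (i * p) N_gt0).
have ginj : injective g.
  move=> i j /(congr1 val) /= E; apply: val_inj; exact: (mod_cancel (ltn_ord i) (ltn_ord j) E).
rewrite -(card_imset _ ginj); apply: subset_leq_card; apply/subsetP => y /imsetP[i].
rewrite !inE => /andP[/eqP iu Pi] ->; apply/andP; split.
  rewrite /= modn_dvdm // -modnMml iu modnMml; by [].
by rewrite /= -tau.
Qed.

Lemma c_chain u k : (c (u %% t) <= c ((u * p ^ k) %% t))%N.
Proof.
elim: k => [|k IH]; first by rewrite muln1.
apply: leq_trans IH _; rewrite -(modn_mod (u * p ^ k)).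
apply: leq_trans (c_mono _) _; rewrite modnMml. by rewrite (expnSr p k) mulnA.
Qed.

Lemma c_const u : (0 < u < t)%N -> c u = c 1.
Proof.
move=> /andP[u0 ut].
have t1 : (1 < t)%N by apply: prime_gt1.
have uF0 : (u%:R : 'F_t) != 0.
  by rewrite -(dvdn_pcharf (pchar_Fp tp)); apply/negP => /(dvdn_leq u0); rewrite leqNgt ut.
have un : (u%:R : 'F_t) ^+ t.-1 = 1.
  apply: (mulIf uF0); rewrite mul1r -exprSr prednK ?prime_gt0 //.
  by have := expf_card (u%:R : 'F_t); rewrite card_Fp.
have [k Ek] := prim_rootP prt un.
have ptm : ((p ^ t.-1) %% t = 1)%N.
  have E : ((p ^ t.-1)%:R : 'F_t) = 1%:R by rewrite natrX (prim_expr_order prt).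
  by have := Ft_eq tp E; rewrite (modn_small t1).
move: Ek. rewrite -natrX. move=> /(Ft_eq tp). rewrite (modn_small ut) => uk.
apply/eqP; rewrite eqn_leq; apply/andP; split.
  have := c_chain (p ^ k) (t.-1 - k). rewrite -expnD subnKC; last exact: ltnW (ltn_ord k).
  by rewrite -uk ptm.
have := c_chain 1 k; rewrite mul1n -uk (modn_small t1). by [].
Qed.


Local Open Scope nat_scope.
Lemma t_gt0 : (0 < t)%N. Proof. exact: prime_gt0. Qed.

Lemma sum_c : \sum_(0 <= u < t) c u = (q + 1)%N.
Proof.
rewrite /cnt exchange_big_nat -cntP; apply: eq_bigr => i _.
by rewrite sum_eqk // ltn_pmod // t_gt0.
Qed.

Local Notation D x := (cnt N (fun i => P i && P (i + x)%N)).

Lemma sumsq_c : \sum_(0 <= u < t) (c u * c u)%N =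
  \sum_(0 <= x < N) ((t %| x) * D x)%N.
Proof.
have E1 : forall u, (c u * c u = \sum_(0 <= i < N) \sum_(0 <= j < N)
     (((i %% t == u) && P i) && ((j %% t == u) && P j) : nat))%N.
  move=> u; rewrite /cnt big_distrl /=; apply: eq_bigr => i _.
  by rewrite big_distrr /=; apply: eq_bigr => j _; rewrite mulnb.
rewrite (eq_bigr _ (fun u _ => E1 u)) exchange_big_nat /=.
have E2 : forall i, \sum_(0 <= u < t) \sum_(0 <= j < N)
     (((i %% t == u) && P i) && ((j %% t == u) && P j) : nat) =
   \sum_(0 <= j < N) ((P i && P j) && (j %% t == i %% t) : nat).
  move=> i; rewrite exchange_big_nat; apply: eq_bigr => j _.
  rewrite -(sum_eqk (P i && P j && (j %% t == i %% t)) (ltn_pmod i t_gt0)).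
  apply: eq_bigr => u _; case: eqP => [<-|] /=; last by [].
  by case: (P i); case: (P j); case: (j %% t == i %% t).
rewrite (eq_bigr _ (fun i _ => E2 i)).
have E3 : forall i, \sum_(0 <= j < N) ((P i && P j) && (j %% t == i %% t) : nat) =
   \sum_(0 <= x < N) ((t %| x) * (P i && P (i + x)%N))%N.
  move=> i.
  have W : forall j, (fun j => ((P i && P j) && (j %% t == i %% t) : nat)) (j + N)
                   = (fun j => ((P i && P j) && (j %% t == i %% t) : nat)) j.
    by move=> j /=; rewrite Pper -modnDmr (eqP tN) addn0.
  rewrite -(window_sum W i); apply: eq_bigr => x _.
  have -> : ((i + x) %% t == i %% t) = (t %| x).
    by rewrite -{2}(addn0 i) eqn_modDl mod0n.
  by rewrite mulnb /=; case: (P i); case: (P (i + x)%N); case: (t %| x).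
rewrite (eq_bigr _ (fun i _ => E3 i)) exchange_big_nat /=; apply: eq_bigr => x _.
by rewrite /cnt big_distrr.
Qed.

Lemma D0 : D 0 = (q + 1)%N.
Proof. by rewrite -cntP; apply: eq_bigr => i _; rewrite addn0 andbb. Qed.

Lemma Dsum : \sum_(0 <= x < N) D x = ((q + 1) * (q + 1))%N.
Proof.
have W : forall j, (fun j => nat_of_bool (P j)) (j + N) = (fun j => nat_of_bool (P j)) j.
  by move=> j /=; rewrite Pper.
rewrite /cnt exchange_big_nat /=.
rewrite (eq_bigr (fun i => P i * (q + 1))); last first.
  move=> i _; rewrite -cntP /cnt -(window_sum W i) big_distrr /=.
  by apply: eq_bigr => x _; rewrite mulnb.
by rewrite -big_distrl /= -/(cnt N P) cntP.
Qed.

Lemma Dle1 x : (0 < x < N)%N -> (D x <= 1)%N.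
Proof.
move=> xN; rewrite leqNgt cnt_card; apply/negP => /card_gt1P[i [j [Hi Hj ij]]].
move: Hi Hj; rewrite !inE => /andP[Pi Pix] /andP[Pj Pjx].
by apply: (noint xN (ltn_ord i) (ltn_ord j) ij Pi Pj Pix Pjx).
Qed.

Lemma Deq1 x : (0 < x < N)%N -> D x = 1%N.
Proof.
move=> xN; apply/eqP; rewrite eqn_leq Dle1 //=.
have S1 : \sum_(1 <= y < N) D y = (q * (q + 1))%N.
  have := Dsum; rewrite big_ltn ?N_gt0 // D0 => E.
  by apply/eqP; rewrite -(eqn_add2l (q + 1)) E; apply/eqP; ring.
have S2 : \sum_(1 <= y < N) (1 - D y)%N = 0%N.
  apply/eqP; rewrite -(eqn_add2r (\sum_(1 <= y < N) D y)) -big_split /=.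
  rewrite (eq_big_nat _ _ (F2 := fun _ => 1%N)); last first.
    move=> y /andP[y1 yN]; rewrite subnK //; apply: Dle1.
    by rewrite yN andbT.
  by rewrite sum_nat_const_nat S1 muln1 add0n addn1 subn1 /=; apply/eqP; ring.
move: S2 => /eqP; rewrite (big_seq) sum_nat_seq_eq0 => /allP /(_ x).
have xi : x \in index_iota 1 N by rewrite mem_index_iota.
by move=> /(_ xi); rewrite xi /= subn_eq0.
Qed.

Lemma sum_dvd : \sum_(0 <= x < N) (t %| x : nat) = (N %/ t)%N.
Proof.
have W : forall x, (fun x => nat_of_bool (t %| x)) (x + t) = (fun x => nat_of_bool (t %| x)) x.
  by move=> x /=; rewrite dvdn_addl.
rewrite -{1}(divnK tN) mulnC (block_sum _ W).
suff -> : \sum_(0 <= x < t) (t %| x : nat) = 1 by rewrite muln1.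
have := t_gt0; case: (t) => // t' _.
rewrite big_nat_recl //= big_nat_cond big1 // => i /andP[/andP[_ it] _].
have : ~~ (t'.+1 %| i.+1).
  by apply/negP => /dvdn_leq => /(_ isT); rewrite ltnS leqNgt it.
by case: (t'.+1 %| i.+1).
Qed.


Lemma sumsq_val : \sum_(0 <= u < t) (c u * c u)%N = (q + N %/ t)%N.
Proof.
rewrite sumsq_c (eq_big_nat _ _ (F2 := fun x => (t %| x : nat) + (x == 0%N) * q)%N); last first.
  move=> x /andP[_ xN]; case: (posnP x) => [->|x0].
    by rewrite D0 dvdn0 mul1n /= mul1n addnC.
  by rewrite Deq1 ?x0 // muln1 /= addn0.
rewrite big_split /= sum_dvd addnC; congr (_ + _)%N.
rewrite big_ltn ?N_gt0 // eqxx mul1n big_nat_cond big1 ?addn0 //.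
by move=> i /andP[/andP[i1 _] _]; rewrite (gtn_eqF i1).
Qed.

Local Open Scope ring_scope.

Lemma main : ((t %| q + s + 1) \/ (t %| q - s + 1))%N /\
  exists eps : int, (eps = 1 \/ eps = -1) /\
    (forall u : nat, (1 <= u <= t - 1)%N ->
       (t%:Z * (w_count q t alpha V u)%:Z = q%:Z + 1 + eps * s%:Z)) /\
    (t%:Z * (w_count q t alpha V 0)%:Z
       = q%:Z + 1 + eps * (1 - t%:Z) * s%:Z).
Proof.
have t1 : (1 < t)%N by apply: prime_gt1.
have wc : forall u, w_count q t alpha V u = c u.
  by move=> u; rewrite cnt_card.
set W := c 1; set W0 := c 0.
have H1 : (W0 + t.-1 * W = q + 1)%N.
  rewrite -sum_c big_ltn ?t_gt0 //; congr (_ + _)%N.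
  rewrite (eq_big_nat _ _ (F2 := fun _ => W)); first by rewrite sum_nat_const_nat subn1.
  by move=> u /andP[u1 ut]; apply: c_const; rewrite u1.
have H2 : (W0 * W0 + t.-1 * (W * W) = q + N %/ t)%N.
  rewrite -sumsq_val big_ltn ?t_gt0 //; congr (_ + _)%N.
  rewrite (eq_big_nat _ _ (F2 := fun _ => (W * W)%N)); first by rewrite sum_nat_const_nat subn1.
  by move=> u /andP[u1 ut]; rewrite c_const // u1.
have H3 : (N %/ t * t = N)%N := divnK tN.
move: H1 H2 H3; set M := (N %/ t)%N => H1 H2 H3.
have H1z : W0%:Z = (q%:Z + 1) - (t%:Z - 1) * W%:Z by lia.
have H2z : W0%:Z * W0%:Z + (t%:Z - 1) * (W%:Z * W%:Z) = q%:Z + M%:Z by lia.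
have H3z : M%:Z * t%:Z = q%:Z * q%:Z + q%:Z + 1 by lia.
rewrite H1z in H2z.
have E2 := congr1 (fun z => t%:Z * z) H2z; simpl in E2.
have key : (t%:Z - 1) * ((t%:Z * W%:Z - (q%:Z + 1)) ^+ 2 - q%:Z) = 0.
  rewrite expr2; lia.
set a := t%:Z * W%:Z - (q%:Z + 1) in key.
have tz : (t%:Z - 1) != 0 by apply/eqP; lia.
have Ha : a ^+ 2 = s%:Z ^+ 2.
  move/eqP: key; rewrite mulf_eq0 (negbTE tz) /= subr_eq0 => /eqP ->.
  by rewrite qs expr2; lia.
have sq : (s <= q)%N by rewrite qs expnS expn1; case: (s) => // s'; exact: leq_pmulr.
have E1 := congr1 (fun z => t%:Z * z) H1z; simpl in E1.
have [ea|ea] : a = s%:Z \/ a = - s%:Z.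
  move/eqP: Ha; rewrite -subr_eq0 subr_sqr mulf_eq0 subr_eq0 addr_eq0.
  by case/orP => /eqP; auto.
- have Ea : t%:Z * W%:Z = q%:Z + 1 + s%:Z by rewrite -ea /a; ring.
  have Ea2 := congr1 (fun z => t%:Z * z) Ea; simpl in Ea2.
  split.
    left; have -> : (q + s + 1 = t * W)%N by clear - Ea; lia.
    exact: dvdn_mulr.
  exists 1; split; first by left.
  split.
    move=> u /andP[u1 ut]; rewrite wc c_const; first by clear - Ea; lia.
    by rewrite u1 /=; clear - ut t1; lia.
  by rewrite wc -/W0; clear - E1 Ea Ea2; lia.
- have Ea : t%:Z * W%:Z = q%:Z + 1 - s%:Z by rewrite -[s%:Z]opprK -ea /a; ring.
  have Ea2 := congr1 (fun z => t%:Z * z) Ea; simpl in Ea2.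
  split.
    right; have -> : (q - s + 1 = t * W)%N by clear - Ea sq; lia.
    exact: dvdn_mulr.
  exists (-1); split; first by right.
  split.
    move=> u /andP[u1 ut]; rewrite wc c_const; first by clear - Ea; lia.
    by rewrite u1 /=; clear - ut t1; lia.
  by rewrite wc -/W0; clear - E1 Ea Ea2; lia.
Qed.

End Field.

Unset Implicit Arguments.
Local Open Scope ring_scope.

Theorem proposition6 (p h q s t : nat) (L : finFieldType) (alpha : L)
    (V : {set L}) :
  prime p -> (0 < h)%N -> q = (p ^ h)%N ->
  #|L| = (q ^ 3)%N ->
  (#|L|.-1).-primitive_root alpha ->
  is_Fq_plane q V ->
  tau_fixed q p alpha V ->
  q = (s ^ 2)%N ->
  prime t -> (t %| q ^ 2 + q + 1)%N ->
  (t.-1).-primitive_root (p%:R : 'F_t) ->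
  ((t %| q + s + 1)%N \/ (t %| q - s + 1)%N) /\
  exists eps : int, (eps = 1 \/ eps = -1) /\
    (forall u : nat, (1 <= u <= t - 1)%N ->
       (t%:Z * (w_count q t alpha V u)%:Z = q%:Z + 1 + eps * s%:Z)) /\
    (t%:Z * (w_count q t alpha V 0)%:Z
       = q%:Z + 1 + eps * (1 - t%:Z) * s%:Z).
Proof.
move=> pp h0 qE cL prim plV tau qs tp tN prt.
exact: (main pp h0 qE cL prim plV tau qs tp tN prt).
Qed.
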